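(* Consider a zero-one knapsack instance with $n$ items, integer capacity $W>0$, positive integer weights $w_i$ and integer profits $v_i$, and let $\mathcal{S}^*$ be its set of optimal solutions. Let $V(i,w)$, $C(i,w)$ be the tables defined by: $V(0,w)=0$, $C(0,w)=1$ for $0\le w\le W$; $V(i,w)=-\infty$, $C(i,w)=0$ for $w<0$; and for $1\le i\le n$, $0\le w\le W$, $V(i,w)=\max\{V(i-1,w),V(i-1,w-w_i)+v_i\}$ and $C(i,w)=C(i-1,w)+C(i-1,w-w_i)$ if $V(i-1,w)=V(i-1,w-w_i)+v_i$, $C(i,w)=C(i-1,w)$ if $V(i-1,w)>V(i-1,w-w_i)+v_i$, and $C(i,w)=C(i-1,w-w_i)$ otherwise. Consider the following randomized sampling procedure: start with $L=\emptyset$, $i=n$, $w=W$; while $i>0$ and $w>0$: if $w_i\le w$ and $V(i,w)=V(i-1,w)=V(i-1,w-w_i)+v_i$, then with probability $q=C(i-1,w-w_i)/C(i,w)$ (using a fresh uniform random number $r\in[0,1]$ and testing $r<q$) add $i$ to $L$ and set $w\leftarrow w-w_i$; else if $V(i,w)>V(i-1,w)$, add $i$ to $L$ and set $w\leftarrow w-w_i$; in all cases then set $i\leftarrow i-1$. Output $L$. Then for every $s\in\mathcal{S}^*$, the probability that the procedure outputs $s$ is $1/|\mathcal{S}^*|$.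
   Context: For $s\subseteq[n]=\{1,\dots,n\}$ let $w(s)=\sum_{i\in s}w_i$ and $v(s)=\sum_{i\in s}v_i$. The set of feasible solutions is $\mathcal{S}=\{s\subseteq[n]: w(s)\le W\}$, $v_{\max}=\max_{s\in\mathcal{S}}v(s)$, and $\mathcal{S}^*=\{s\in\mathcal{S}: v(s)=v_{\max}\}$. *)

(* Defs.v *)
From mathcomp Require Import all_boot all_order all_algebra.
Set Implicit Arguments. Unset Strict Implicit. Unset Printing Implicit Defensive.
Import Order.TTheory GRing.Theory Num.Theory.
Local Open Scope ring_scope.

(* Items are numbered 1..n; weights wt : nat -> nat and profits pr : nat -> int
   (only the values at 1..n matter).  Extended integers Z ∪ {-oo} are
   represented by option int, with None = -oo. *)

Definition eadd (x : option int) (c : int) : option int := omap (fun a => a + c) x.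
Definition emax (x y : option int) : option int :=
  match x, y with
  | None, _ => y
  | _, None => x
  | Some a, Some b => Some (Num.max a b)
  end.
Definition elt (x y : option int) : bool :=
  match x, y with
  | _, None => false
  | None, Some _ => true
  | Some a, Some b => a < b
  end.

Section Tables.
Variables (wt : nat -> nat) (pr : nat -> int).

Fixpoint Vt (i : nat) (c : int) : option int :=
  if c < 0 then None else
  match i with
  | 0 => Some 0
  | i'.+1 => emax (Vt i' c) (eadd (Vt i' (c - (wt i)%:Z)) (pr i))
  end.

Fixpoint Ct (i : nat) (c : int) : nat :=
  if c < 0 then 0%N else
  match i with
  | 0 => 1%N
  | i'.+1 =>
      let a := Vt i' c in
      let b := eadd (Vt i' (c - (wt i)%:Z)) (pr i) in
      if a == b then (Ct i' c + Ct i' (c - (wt i)%:Z))%N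
      else if elt b a then Ct i' c
      else Ct i' (c - (wt i)%:Z)
  end.

(* The randomized backtracking procedure, as a finite probability tree:
   a list of (probability weight, output list L) pairs.  A test "r < q"
   with r uniform on [0,1] is a branch taken with probability q
   (and the other with probability 1 - q). *)
Fixpoint samp (i : nat) (c : int) (L : seq nat) : seq (rat * seq nat) :=
  match i with
  | 0 => [:: (1, L)]
  | i'.+1 =>
      if ~~ (0 < c) then [:: (1, L)] else
      if [&& ((wt i)%:Z <= c), Vt i c == Vt i' c
             & Vt i' c == eadd (Vt i' (c - (wt i)%:Z)) (pr i)] then
        let q : rat := (Ct i' (c - (wt i)%:Z))%:R / (Ct i c)%:R in
        [seq (q * p.1, p.2) | p <- samp i' (c - (wt i)%:Z) (i :: L)]
        ++ [seq ((1 - q) * p.1, p.2) | p <- samp i' c L]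
      else if elt (Vt i' c) (Vt i c) then samp i' (c - (wt i)%:Z) (i :: L)
      else samp i' c L
  end.

End Tables.

(* Subsets of [n] = {1..n} are represented as {set 'I_n}, the ordinal k
   standing for item k.+1. *)
Definition wsum (n : nat) (wt : nat -> nat) (s : {set 'I_n}) : nat :=
  (\sum_(k in s) wt k.+1)%N.
Definition vsum (n : nat) (pr : nat -> int) (s : {set 'I_n}) : int :=
  \sum_(k in s) pr k.+1.

Definition feasible (n W : nat) (wt : nat -> nat) (s : {set 'I_n}) : bool :=
  (wsum wt s <= W)%N.

Arguments feasible : clear implicits.
Definition Sstar (n W : nat) (wt : nat -> nat) (pr : nat -> int) : {set {set 'I_n}} :=
  [set s | feasible n W wt s && [forall t : {set 'I_n}, feasible n W wt t ==> (vsum pr t <= vsum pr s)]].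

Definition set_of_list (n : nat) (L : seq nat) : {set 'I_n} :=
  [set k : 'I_n | k.+1 \in L].

Definition prob_output (n W : nat) (wt : nat -> nat) (pr : nat -> int)
    (s : {set 'I_n}) : rat :=
  \sum_(p <- samp wt pr n W%:Z [::] | set_of_list n p.2 == s) p.1.
Arguments Sstar : clear implicits.
Arguments prob_output : clear implicits.

(* Main.v *)
Require Import Defs.
From mathcomp Require Import all_boot all_order all_algebra.
From mathcomp Require Import zify ring lra.
From Stdlib Require Import Btauto.
Set Implicit Arguments. Unset Strict Implicit. Unset Printing Implicit Defensive.
Import Order.TTheory GRing.Theory Num.Theory.
Local Open Scope ring_scope.

Lemma elt_irr a : elt a a = false.
Proof. by case: a => //= x; rewrite ltxx. Qed.

Lemma elt_asym a b : elt a b -> elt b a = false.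
Proof. by case: a; case: b => //= x y; move=> h; apply/negbTE; rewrite -leNgt ltW. Qed.

Lemma elt_total a b : a != b -> ~~ elt a b -> elt b a.
Proof.
case: a; case: b => //= x y; rewrite ?eqE /= => h1; rewrite -leNgt le_eqVlt.
by case/orP => // /eqP e; move: h1; rewrite e eqxx.
Qed.

Lemma emax_cases a b :
  (emax a b = a /\ ~~ elt a b) \/ (emax a b = b /\ elt a b).
Proof.
case: a => [x|]; case: b => [y|] /=; auto.
rewrite /Order.max; case: ifP => h.
  by right.
by left.
Qed.

Lemma emax_ge a b z : emax a b = Some z ->
  (forall x, a = Some x -> x <= z) /\ (forall x, b = Some x -> x <= z).
Proof.
case: a => [x|]; case: b => [y|] //= [<-]; split => u // [<-] //;
by rewrite le_max lexx ?orbT.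
Qed.

Section S.
Variables (n : nat) (wt : nat -> nat) (pr : nat -> int).
Hypothesis wpos : forall i, (1 <= i <= n)%N -> (0 < wt i)%N.

Lemma Vt_S i c : Vt wt pr i.+1 c = if c < 0 then None else
  emax (Vt wt pr i c) (eadd (Vt wt pr i (c - (wt i.+1)%:Z)) (pr i.+1)).
Proof. by []. Qed.

Lemma Vt_neg i c : c < 0 -> Vt wt pr i c = None.
Proof. by case: i => [|i] h; rewrite /= h. Qed.

Lemma Vt_0 c : 0 <= c -> Vt wt pr 0 c = Some 0.
Proof. by move=> h; rewrite /= ltNge h. Qed.

Lemma Vt_some i c : 0 <= c -> exists v, Vt wt pr i c = Some v.
Proof.
elim: i c => [|i IH] c h; first by rewrite Vt_0 //; eauto.
rewrite Vt_S ltNge h /=.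
have [x ->] := IH c h.
case: (eadd _ _) => [y|] /=; eauto.
Qed.

Lemma Ct_S i c : Ct wt pr i.+1 c = if c < 0 then 0%N else
  if Vt wt pr i c == eadd (Vt wt pr i (c - (wt i.+1)%:Z)) (pr i.+1)
  then (Ct wt pr i c + Ct wt pr i (c - (wt i.+1)%:Z))%N
  else if elt (eadd (Vt wt pr i (c - (wt i.+1)%:Z)) (pr i.+1)) (Vt wt pr i c)
  then Ct wt pr i c else Ct wt pr i (c - (wt i.+1)%:Z).
Proof. by []. Qed.

Lemma Ct_0 c : 0 <= c -> Ct wt pr 0 c = 1%N.
Proof. by move=> h; rewrite /= ltNge h. Qed.

Lemma samp_S i c L : samp wt pr i.+1 c L =
      if ~~ (0 < c) then [:: (1, L)] else
      if [&& ((wt i.+1)%:Z <= c), Vt wt pr i.+1 c == Vt wt pr i c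
             & Vt wt pr i c == eadd (Vt wt pr i (c - (wt i.+1)%:Z)) (pr i.+1)] then
        let q : rat := (Ct wt pr i (c - (wt i.+1)%:Z))%:R / (Ct wt pr i.+1 c)%:R in
        [seq (q * p.1, p.2) | p <- samp wt pr i (c - (wt i.+1)%:Z) (i.+1 :: L)]
        ++ [seq ((1 - q) * p.1, p.2) | p <- samp wt pr i c L]
      else if elt (Vt wt pr i c) (Vt wt pr i.+1 c) then samp wt pr i (c - (wt i.+1)%:Z) (i.+1 :: L)
      else samp wt pr i c L.
Proof. by []. Qed.

Arguments Vt : simpl never.
Arguments Ct : simpl never.
Arguments samp : simpl never.

Lemma Ct_pos i c : 0 <= c -> (0 < Ct wt pr i c)%N.
Proof.
elim: i c => [|i IH] c h; first by rewrite Ct_0.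
rewrite Ct_S ltNge h /=.
case: ifP => [_|e]; first by rewrite addn_gt0 IH.
case: ifP => [_|l]; first exact: IH.
case: (lerP 0 (c - (wt i.+1)%:Z)) => h2; first exact: IH.
move: l; rewrite (Vt_neg _ h2) /=.
by have [x ->] := Vt_some i h.
Qed.

Lemma Vt_c0 i : (i <= n)%N -> Vt wt pr i 0 = Some 0.
Proof.
elim: i => [|i IH] hi; first by rewrite Vt_0.
have w0 : (0 < wt i.+1)%N by apply: wpos; rewrite hi.
rewrite Vt_S ltxx IH ?(ltnW hi) // Vt_neg //=.
by rewrite add0r oppr_lt0 ltz_nat.
Qed.

Lemma Ct_c0 i : (i <= n)%N -> Ct wt pr i 0 = 1%N.
Proof.
elim: i => [|i IH] hi; first by rewrite Ct_0.
have w0 : (0 < wt i.+1)%N by apply: wpos; rewrite hi.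
rewrite Ct_S ltxx Vt_c0 ?(ltnW hi) // Vt_neg /=; last by rewrite add0r oppr_lt0 ltz_nat.
exact: IH (ltnW hi).
Qed.

Definition F i : {set 'I_n} := [set k : 'I_n | (k < i)%N].

Lemma wsum_D1 (t : {set 'I_n}) k : k \in t ->
  wsum wt t = (wt k.+1 + wsum wt (t :\ k))%N.
Proof. by move=> h; rewrite /wsum (big_setD1 k h). Qed.

Lemma vsum_D1 (t : {set 'I_n}) k : k \in t ->
  vsum pr t = pr k.+1 + vsum pr (t :\ k).
Proof. by move=> h; rewrite /vsum (big_setD1 k h). Qed.

Lemma wsum0 : wsum wt (set0 : {set 'I_n}) = 0%N.
Proof. by rewrite /wsum big_set0. Qed.

Lemma vsum0 : vsum pr (set0 : {set 'I_n}) = 0.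
Proof. by rewrite /vsum big_set0. Qed.

Lemma wsum_pos (t : {set 'I_n}) : t != set0 -> (0 < wsum wt t)%N.
Proof.
case/set0Pn => k kt; rewrite (wsum_D1 kt).
have : (0 < wt k.+1)%N by apply: wpos; rewrite ltn_ord.
by move=> h; rewrite addn_gt0 h.
Qed.

Definition optb i c (t : {set 'I_n}) :=
  ((wsum wt t)%:Z <= c) && (Vt wt pr i c == Some (vsum pr t)).

Lemma UB i (c : int) (t : {set 'I_n}) : (i <= n)%N -> t \subset F i ->
  (wsum wt t)%:Z <= c -> exists v, Vt wt pr i c = Some v /\ vsum pr t <= v.
Proof.
elim: i c t => [|i IH] c t hi ht hw.
  have -> : t = set0.
    apply/setP => k; rewrite inE; apply/negbTE/negP => /(subsetP ht).
    by rewrite inE.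
  by exists 0; rewrite vsum0 Vt_0 //; apply: le_trans hw.
have c0 : 0 <= c by apply: le_trans hw.
have hi' : (i < n)%N := hi.
set k0 : 'I_n := Ordinal hi'.
case: (boolP (k0 \in t)) => hk.
  have ht' : t :\ k0 \subset F i.
    apply/subsetP => k; rewrite !inE => /andP [nk /(subsetP ht)].
    rewrite inE ltnS leq_eqVlt => /orP [/eqP e|//].
    by move: nk; rewrite (_ : k = k0) ?eqxx //; apply: val_inj.
  have E : (wsum wt t = wt i.+1 + wsum wt (t :\ k0))%N := wsum_D1 hk.
  have hw' : (wsum wt (t :\ k0))%:Z <= c - (wt i.+1)%:Z.
    by move: hw; rewrite E; lia.
  have [v [e1 e2]] := IH (c - (wt i.+1)%:Z) _ (ltnW hi) ht' hw'.
  rewrite Vt_S ltNge c0 /= e1 /=.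
  have [x ex] : exists x, emax (Vt wt pr i c) (Some (v + pr i.+1)) = Some x.
    by case: (Vt wt pr i c) => [y|] /=; eauto.
  exists x; split => //.
  have [_ h2] := emax_ge ex.
  rewrite (vsum_D1 hk) addrC; apply: le_trans (h2 _ erefl).
  by rewrite lerD2r.
have ht' : t \subset F i.
  apply/subsetP => k kt; have := subsetP ht k kt.
  rewrite !inE ltnS leq_eqVlt => /orP [/eqP e|//].
  by move: hk; rewrite (_ : k0 = k) ?kt //; apply: val_inj.
have [v [e1 e2]] := IH c _ (ltnW hi) ht' hw.
rewrite Vt_S ltNge c0 /= e1.
have [x ex] : exists x, emax (Some v) (eadd (Vt wt pr i (c - (wt i.+1)%:Z)) (pr i.+1)) = Some x.
  by case: (eadd _ _) => [y|] /=; eauto.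
exists x; split => //.
have [h1 _] := emax_ge ex.
exact: le_trans (h1 _ erefl).
Qed.

Lemma optb_in i (c : int) (s : {set 'I_n}) (hi : (i < n)%N) : 0 <= c -> Ordinal hi \in s ->
  optb i.+1 c (s :&: F i.+1) = [&& (wt i.+1)%:Z <= c, optb i (c - (wt i.+1)%:Z) (s :&: F i)
     & Vt wt pr i.+1 c == eadd (Vt wt pr i (c - (wt i.+1)%:Z)) (pr i.+1)].
Proof.
set k0 := Ordinal hi; move=> c0 hk.
have kin : k0 \in s :&: F i.+1 by rewrite !inE hk /= ltnS leqnn.
have eS : (s :&: F i.+1) :\ k0 = s :&: F i.
  apply/setP => k; rewrite !inE ltnS leq_eqVlt.
  case: (k \in s); rewrite ?andbF //=.
  have -> : (k == k0) = (nat_of_ord k == i) by [].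
  by case: eqP => //= ->; rewrite ltnn.
have EW : (wsum wt (s :&: F i.+1) = wt i.+1 + wsum wt (s :&: F i))%N.
  by rewrite (wsum_D1 kin) eS.
have EV : vsum pr (s :&: F i.+1) = pr i.+1 + vsum pr (s :&: F i).
  by rewrite (vsum_D1 kin) eS.
have sub : s :&: F i \subset F i by apply: subsetIr.
rewrite /optb EW EV.
apply/idP/idP.
  case/andP => hw /eqP hv0.
  have hw' : (wsum wt (s :&: F i))%:Z <= c - (wt i.+1)%:Z by move: hw; lia.
  have hwc : (wt i.+1)%:Z <= c by move: hw; lia.
  have [v [e1 e2]] := UB (ltnW hi) sub hw'.
  have hv : emax (Vt wt pr i c) (Some (v + pr i.+1)) = Some (pr i.+1 + vsum pr (s :&: F i)).
    by rewrite -hv0 Vt_S ltNge c0 /= e1.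
  have [_ h2] := emax_ge hv.
  have := h2 _ erefl => h3.
  have ev : v = vsum pr (s :&: F i) by move: e2 h3; lia.
  by rewrite hwc hw' e1 ev eqxx hv0 /= addrC eqxx.
case/and3P => hw /andP [hw' /eqP e1] /eqP e2.
rewrite e2 e1 /= addrC eqxx andbT.
by move: hw hw'; lia.
Qed.

Lemma optb_out i (c : int) (s : {set 'I_n}) (hi : (i < n)%N) : 0 <= c -> Ordinal hi \notin s ->
  optb i.+1 c (s :&: F i.+1) = optb i c (s :&: F i) && (Vt wt pr i.+1 c == Vt wt pr i c).
Proof.
set k0 := Ordinal hi; move=> c0 hk.
have eS : s :&: F i.+1 = s :&: F i.
  apply/setP => k; rewrite !inE ltnS leq_eqVlt.
  case ks: (k \in s); rewrite ?andbF //=.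
  case: eqP => //= e; move: hk; rewrite (_ : k0 = k) ?ks //.
  by apply: val_inj.
have sub : s :&: F i \subset F i by apply: subsetIr.
rewrite /optb eS.
apply/idP/idP.
  case/andP => hw /eqP hv0.
  have [v [e1 e2]] := UB (ltnW hi) sub hw.
  have hv : emax (Some v) (eadd (Vt wt pr i (c - (wt i.+1)%:Z)) (pr i.+1)) = Some (vsum pr (s :&: F i)).
    by rewrite -hv0 Vt_S ltNge c0 /= e1.
  have [h2 _] := emax_ge hv.
  have := h2 _ erefl => h3.
  have ev : v = vsum pr (s :&: F i) by move: e2 h3; lia.
  by rewrite hw e1 ev hv0 eqxx.
by case/andP => /andP [hw /eqP e1] /eqP e2; rewrite hw e2 e1 eqxx.
Qed.

Definition G i (L : seq nat) (s : {set 'I_n}) :=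
  [forall k : 'I_n, (i <= k)%N ==> ((k \in s) == (k.+1 \in L))].
Definition cond i (c : int) (L : seq nat) (s : {set 'I_n}) := optb i c (s :&: F i) && G i L s.

Lemma G_split i (hi : (i < n)%N) (Q : 'I_n -> bool) :
  [forall k : 'I_n, (i <= k)%N ==> Q k] =
  Q (Ordinal hi) && [forall k : 'I_n, (i.+1 <= k)%N ==> Q k].
Proof.
apply/forallP/andP.
  move=> H; split; first by have := H (Ordinal hi); rewrite /= leqnn.
  apply/forallP => k; apply/implyP => hk.
  exact: (implyP (H k)) (ltnW hk).
case=> [Hk0 /forallP H] k; apply/implyP; rewrite leq_eqVlt.
case/orP => [/eqP e|hk]; last exact: (implyP (H k)) hk.
by rewrite (_ : k = Ordinal hi) //; apply: val_inj.
Qed.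

Lemma G_cons i (hi : (i < n)%N) L (s : {set 'I_n}) : all (fun x => i.+1 < x)%N L ->
  G i (i.+1 :: L) s = (Ordinal hi \in s) && G i.+1 L s.
Proof.
move=> _; rewrite /G (G_split hi) /= in_cons eqxx /= eqb_id; congr (_ && _).
apply: eq_forallb => k; case: (leqP i.+1 k) => //= hk.
by rewrite in_cons eqSS (gtn_eqF hk).
Qed.

Lemma G_nocons i (hi : (i < n)%N) L (s : {set 'I_n}) : all (fun x => i.+1 < x)%N L ->
  G i L s = (Ordinal hi \notin s) && G i.+1 L s.
Proof.
move=> hL; rewrite /G (G_split hi) /=; congr (_ && _).
have -> : (i.+1 \in L) = false.
  by apply/negP => /(allP hL); rewrite ltnn.
by case: (_ \in s).
Qed.

Lemma cond_S i (c : int) L (s : {set 'I_n}) : (i < n)%N -> 0 <= c -> all (fun x => i.+1 < x)%N L ->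
  cond i.+1 c L s =
  [&& (wt i.+1)%:Z <= c, Vt wt pr i.+1 c == eadd (Vt wt pr i (c - (wt i.+1)%:Z)) (pr i.+1)
    & cond i (c - (wt i.+1)%:Z) (i.+1 :: L) s]
  || ((Vt wt pr i.+1 c == Vt wt pr i c) && cond i c L s).
Proof.
move=> hi c0 hL; rewrite /cond (G_cons hi _ hL) (G_nocons hi _ hL).
case: (boolP (Ordinal hi \in s)) => hk.
  rewrite (@optb_in i c s hi c0 hk) /=; btauto.
rewrite (@optb_out i c s hi c0 hk) /=; btauto.
Qed.

Lemma cond_excl i (c : int) L (s : {set 'I_n}) : (i < n)%N -> all (fun x => i.+1 < x)%N L ->
  ~~ (cond i (c - (wt i.+1)%:Z) (i.+1 :: L) s && cond i c L s).
Proof.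
move=> hi hL; rewrite /cond (G_cons hi _ hL) (G_nocons hi _ hL).
by case: (Ordinal hi \in s); rewrite /= !andbF.
Qed.


Lemma samp_0 c L : samp wt pr 0 c L = [:: (1, L)].
Proof. by []. Qed.

Lemma F0 : F 0 = set0.
Proof. by apply/setP => k; rewrite !inE. Qed.

Lemma optb_i0 (c : int) (s : {set 'I_n}) : 0 <= c -> optb 0 c (s :&: F 0) = true.
Proof. by move=> c0; rewrite F0 setI0 /optb wsum0 vsum0 Vt_0 // c0 eqxx. Qed.

Lemma optb_c0 i (t : {set 'I_n}) : (i <= n)%N -> optb i 0 t = (t == set0).
Proof.
move=> hi; rewrite /optb Vt_c0 //.
case: (eqVneq t set0) => [->|ne]; first by rewrite wsum0 vsum0 !eqxx.
have h := wsum_pos ne.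
by apply/negbTE; apply/negP => /andP [h1 _]; move: h h1; lia.
Qed.

Lemma solE L (s : {set 'I_n}) :
  (set_of_list n L == s) = [forall k : 'I_n, (k \in s) == (k.+1 \in L)].
Proof.
apply/eqP/forallP => [<- k|H]; first by rewrite inE.
by apply/setP => k; rewrite inE (eqP (H k)).
Qed.

Lemma stop_eq i L (s : {set 'I_n}) : all (fun x => i < x)%N L ->
  ((s :&: F i == set0) && G i L s) = (set_of_list n L == s).
Proof.
move=> hL; rewrite solE; apply/andP/forallP.
  case=> /eqP E /forallP H k.
  case: (leqP i k) => hk; first exact: (implyP (H k)) hk.
  have ks : (k \in s) = false.
    apply/negbTE; apply/negP => ks.
    have : k \in s :&: F i by rewrite !inE ks hk.
    by rewrite E inE.
  have kL : (k.+1 \in L) = false.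
    by apply/negbTE/negP => /(allP hL); rewrite ltnS leqNgt hk.
  by rewrite ks kL.
move=> H; split.
  apply/eqP/setP => k; rewrite !inE.
  case hk: (k < i)%N; rewrite ?andbF // andbT.
  have kL : (k.+1 \in L) = false.
    by apply/negbTE/negP => /(allP hL); rewrite ltnS leqNgt hk.
  by have := H k; rewrite kL => /eqP.
by apply/forallP => k; apply/implyP => _; exact: H k.
Qed.

Definition P i c L s := \sum_(p <- samp wt pr i c L | set_of_list n p.2 == s) p.1.

Lemma mass i c L : \sum_(p <- samp wt pr i c L) p.1 = 1.
Proof.
elim: i c L => [|i IH] c L; first by rewrite samp_0 big_cons big_nil addr0.
rewrite samp_S; case: ifP => _; first by rewrite big_cons big_nil addr0.
case: ifP => _.
  rewrite big_cat !big_map /= -!mulr_sumr !IH.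
  by rewrite !mulr1 addrC subrK.
by case: ifP => _; apply: IH.
Qed.

Lemma main i : (i <= n)%N -> forall c L s, 0 <= c -> all (fun x => i < x)%N L ->
  P i c L s * (Ct wt pr i c)%:R = (cond i c L s)%:R.
Proof.
elim: i => [|i IH] hi c L s c0 hL.
  have E : cond 0 c L s = (set_of_list n L == s).
    by rewrite /cond optb_i0 // -(stop_eq _ hL) F0 setI0 eqxx.
  rewrite /P samp_0 big_cons big_nil /= Ct_0 // E.
  by case: eqP => _; rewrite ?addr0 mulr1.
have hi' : (i < n)%N := hi.
have hL' : all (fun x => i < x)%N L by apply: sub_all hL => x /ltnW.
have hL1 : all (fun x => i < x)%N (i.+1 :: L) by rewrite /= ltnSn.
case: (lerP c 0) => hc.
  have -> : c = 0 by apply/eqP; rewrite eq_le hc c0.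
  have E : cond i.+1 0 L s = (set_of_list n L == s).
    by rewrite /cond optb_c0 // stop_eq.
  rewrite /P samp_S ltxx /= big_cons big_nil Ct_c0 // E.
  by case: eqP => _; rewrite ?addr0 mulr1.
have [va eva] := Vt_some i c0.
set w := (wt i.+1)%:Z.
set b := eadd (Vt wt pr i (c - w)) (pr i.+1).
have eV : Vt wt pr i.+1 c = emax (Vt wt pr i c) b by rewrite Vt_S ltNge c0.
have hb : c - w < 0 -> b = None by move=> h; rewrite /b Vt_neg.
rewrite /P samp_S hc /=.
case: ifP => htie.
  case/and3P: (htie) => hw /eqP e1 /eqP e2.
  have cw : 0 <= c - w by rewrite subr_ge0.
  have eC : Ct wt pr i.+1 c = (Ct wt pr i c + Ct wt pr i (c - w))%N.
    by rewrite Ct_S ltNge c0 /= -/w -/b e2 eqxx.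
  rewrite big_cat !big_map /= -!mulr_sumr.
  have h1 := IH (ltnW hi) (c - w) (i.+1 :: L) s cw hL1.
  have h2 := IH (ltnW hi) c L s c0 hL'.
  rewrite /P in h1 h2.
  rewrite (cond_S _ hi' c0 hL) -/w -/b hw e1 e2 eqxx /=.
  have ex := cond_excl c s hi' hL.
  move: h1 h2 ex; rewrite eC.
  set P1 := \sum_(_ <- _ | _) _.
  set P2 := \sum_(_ <- _ | _) _.
  have p1 := Ct_pos i cw; have p2 := Ct_pos i c0.
  move: p1 p2.
  move: (Ct wt pr i c) (Ct wt pr i (c - w)) => C2 C1 p1 p2 h1 h2 ex.
  have D : (C2 + C1)%:R != 0 :> rat by rewrite pnatr_eq0; move: p1; lia.
  have -> : (C1%:R / (C2 + C1)%:R * P1 + (1 - C1%:R / (C2 + C1)%:R) * P2) * (C2 + C1)%:R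
     = P1 * C1%:R + P2 * C2%:R.
    by rewrite natrD in D *; field.
  rewrite h1 h2.
  by move: ex; case: (cond _ _ _ _); case: (cond _ _ _ _).
case: ifP => hel.
  have [[em ne]|[em lt]] := emax_cases (Vt wt pr i c) b.
    by move: hel; rewrite eV em elt_irr.
  have hw : w <= c.
    case: (lerP w c) => // h.
    by move: lt; rewrite hb ?subr_lt0 // eva.
  have cw : 0 <= c - w by rewrite subr_ge0.
  have eC : Ct wt pr i.+1 c = Ct wt pr i (c - w).
    rewrite Ct_S ltNge c0 /= -/w -/b (elt_asym lt).
    have -> : (Vt wt pr i c == b) = false.
      by apply/negbTE/negP => /eqP e; move: lt; rewrite e elt_irr.
    by [].
  rewrite eC IH ?(ltnW hi) //.
  rewrite (cond_S _ hi' c0 hL) -/w -/b hw eV em eqxx /=.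
  have -> : (b == Vt wt pr i c) = false.
    by apply/negbTE/negP => /eqP e; move: lt; rewrite e elt_irr.
  by rewrite /= orbF.
have [[em ne]|[em lt]] := emax_cases (Vt wt pr i c) b; last first.
  by move: hel; rewrite eV em lt.
have nab : Vt wt pr i c != b.
  apply/negP => /eqP eab.
  case: (lerP w c) => hw.
    by move: htie; rewrite hw eV em eab !eqxx.
  by move: eab; rewrite hb ?subr_lt0 // eva.
have eC : Ct wt pr i.+1 c = Ct wt pr i c.
  by rewrite Ct_S ltNge c0 /= -/w -/b (negbTE nab) (elt_total nab ne).
rewrite eC IH ?(ltnW hi) //.
rewrite (cond_S _ hi' c0 hL) -/w -/b eV em eqxx (negbTE nab) /=.
by rewrite andbF.
Qed.

Lemma subF (t : {set 'I_n}) : t \subset F n.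
Proof. by apply/subsetP => k _; rewrite inE ltn_ord. Qed.

Lemma final W (s : {set 'I_n}) : (0 < W)%N -> s \in Sstar n W wt pr ->
  prob_output n W wt pr s = 1 / (#|Sstar n W wt pr|%:R : rat).
Proof.
move=> W0 Hs.
have c0 : 0 <= W%:Z by [].
set C := Ct wt pr n W%:Z.
have Cpos : (0 < C)%N := Ct_pos n c0.
have condE t : cond n W%:Z [::] t = optb n W%:Z t.
  rewrite /cond.
  have -> : t :&: F n = t by apply/setIidPl; apply: subF.
  rewrite andb_idr // => _; apply/forallP => k; apply/implyP.
  by rewrite leqNgt ltn_ord.
have key t : prob_output n W wt pr t * C%:R = (optb n W%:Z t)%:R.
  have h := main (leqnn n) t c0 (isT : all (fun x => n < x)%N [::]).
  rewrite -condE -h /P. reflexivity.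
have CR : C%:R != 0 :> rat by rewrite pnatr_eq0 -lt0n.
have Pt t : prob_output n W wt pr t = (optb n W%:Z t)%:R / C%:R.
  by rewrite -key mulfK.
have msum : \sum_t prob_output n W wt pr t = 1.
  rewrite /prob_output.
  under eq_bigr => t _ do rewrite big_mkcond.
  rewrite exchange_big /= -(mass n W%:Z [::]).
  apply: eq_bigr => p _; rewrite -big_mkcond /=.
  by rewrite (big_pred1 (set_of_list n p.2)) // => t; rewrite /= eq_sym.
have card : #|[set t | optb n W%:Z t]| = C.
  move: msum; under eq_bigr => t _ do rewrite Pt.
  rewrite -mulr_suml.
  have -> : \sum_t ((optb n W%:Z t)%:R : rat) = #|[set t | optb n W%:Z t]|%:R.
    rewrite -[RHS]/(1 *+ _) -sumr_const [RHS]big_mkcond /=.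
    by apply: eq_bigr => t _; rewrite inE; case: (optb _ _ _).
  move/(congr1 (fun x => x * C%:R)); rewrite divfK // mul1r.
  by move/eqP; rewrite eqr_nat => /eqP.
have Sst : Sstar n W wt pr = [set t | optb n W%:Z t].
  have [t0] : exists t0, t0 \in [set t | optb n W%:Z t].
    by apply/card_gt0P; rewrite card.
  rewrite inE => /andP [hw0 /eqP hv0].
  apply/setP => t; rewrite !inE /feasible.
  apply/idP/idP.
    case/andP => ft /forallP H.
    have ft' : (wsum wt t)%:Z <= W%:Z by rewrite lez_nat.
    have [v [e1 e2]] := UB (leqnn n) (subF t) ft'.
    have h0 := implyP (H t0); rewrite /feasible -lez_nat in h0.
    have h1 := h0 hw0.
    move: hv0; rewrite e1 => -[ev].
    rewrite /optb ft' e1 ev /=.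
    by apply/eqP; congr Some; apply/eqP; rewrite eq_le h1 -ev e2.
  case/andP => hw /eqP hv.
  rewrite -lez_nat hw /=; apply/forallP => t'; apply/implyP => ft.
  have ft' : (wsum wt t')%:Z <= W%:Z by rewrite lez_nat.
  have [v [e1 e2]] := UB (leqnn n) (subF t') ft'.
  by move: hv; rewrite e1 => -[<-].
rewrite Pt.
have -> : optb n W%:Z s by move: Hs; rewrite Sst inE.
by rewrite Sst card.
Qed.

End S.

Theorem theorem2 (n W : nat) (wt : nat -> nat) (pr : nat -> int) :
  (0 < W)%N ->
  (forall i, (1 <= i <= n)%N -> (0 < wt i)%N) ->
  forall s : {set 'I_n}, s \in Sstar n W wt pr ->
    prob_output n W wt pr s = 1 / (#|Sstar n W wt pr|%:R : rat).
Proof.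
move=> W0 wpos s Hs; exact (final wpos W0 Hs).
Qed.
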